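(* Let $(X,d,\kappa)$ be a digital metric space where $X$ is finite or $d$ is an $\ell_p$ metric for some $1\le p\le\infty$. Let $T:X\to X$ and $\alpha:X\times X\to[0,\infty)$. Suppose (1) $T$ is $\alpha$-admissible; (2) there exists $x_0\in X$ with $\alpha(x_0,T(x_0))\ge1$; and (3) there exist $\psi,\phi\in\Phi$ such that for all $x,y\in X$, \[\alpha(x,y)\,\psi(d(T(x),T(y)))\le\psi(M(x,y))-\phi(M(x,y)),\] where $M(x,y)=\max\{d(x,y),\ d(x,T(x)),\ d(y,T(y)),\ [d(x,T(y))+d(y,T(x))]/2\}$. Then $T$ has a fixed point. Further, if $u$ and $v$ are fixed points of $T$ with $\alpha(u,v)\ge1$, then $u=v$.
   Context: A digital metric space is a triple $(X,d,\kappa)$ where $X\subset\mathbb{Z}^n$ for some positive integer $n$, $\kappa$ is an adjacency relation on $X$, and $d$ is a metric on $X$. The $\ell_p$ metric on $\mathbb{Z}^n$ is $d(x,y)=(\sum_i|x_i-y_i|^p)^{1/p}$ for $1\le p<\infty$ and $\max_i|x_i-y_i|$ for $p=\infty$. $\Phi$ is the set of functions $\phi:[0,\infty)\to[0,\infty)$ that are increasing, satisfy $\phi(t)=0$ iff $t=0$, and $\phi(t)<t$ for $t>0$. $T$ is $\alpha$-admissible if $\alpha(x,y)\ge1$ implies $\alpha(T(x),T(y))\ge1$. *)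

(* Defs.v *)
From HB Require Import structures.
From mathcomp Require Import all_boot all_order all_algebra.
From mathcomp Require Import all_classical all_reals exp.
Set Implicit Arguments. Unset Strict Implicit. Unset Printing Implicit Defensive.
Import Order.TTheory GRing.Theory Num.Theory.
Local Open Scope ring_scope.
Local Open Scope classical_set_scope.

Inductive lp_index (R : realType) := LpFin of R | LpInf.

Definition lp_dist (R : realType) (n : nat) (p : lp_index R)
  (x y : 'rV[int]_n) : R :=
  match p with
  | LpFin q => (\sum_(i < n) `|((x ord0 i - y ord0 i)%:~R : R)| `^ q) `^ q^-1
  | LpInf => \big[Num.max/0]_(i < n) `|((x ord0 i - y ord0 i)%:~R : R)|
  end.

Definition valid_lp_index (R : realType) (p : lp_index R) : Prop :=
  match p with LpFin q => 1 <= q | LpInf => True end.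

Definition is_metric_on (R : realType) (T : Type) (X : set T) (d : T -> T -> R) : Prop :=
  (forall x y, X x -> X y -> 0 <= d x y) /\
  (forall x y, X x -> X y -> (d x y = 0 <-> x = y)) /\
  (forall x y, X x -> X y -> d x y = d y x) /\
  (forall x y z, X x -> X y -> X z -> d x z <= d x y + d y z).

Definition is_lp_metric_on (R : realType) (n : nat) (X : set 'rV[int]_n)
  (d : 'rV[int]_n -> 'rV[int]_n -> R) : Prop :=
  exists p : lp_index R, valid_lp_index p /\
    forall x y, X x -> X y -> d x y = lp_dist p x y.

(* The class Phi of functions [0,oo) -> [0,oo), modelled as R -> R constrained
   on [0,oo): (strictly) increasing, phi t = 0 iff t = 0, phi t < t for t > 0. *)
Definition PhiClass (R : realType) (phi : R -> R) : Prop :=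
  (forall t, 0 <= t -> 0 <= phi t) /\
  (forall s t, 0 <= s -> s < t -> phi s < phi t) /\
  (forall t, 0 <= t -> (phi t = 0 <-> t = 0)) /\
  (forall t, 0 < t -> phi t < t).

Definition alpha_admissible (R : realType) (U : Type) (X : set U)
  (T : U -> U) (alpha : U -> U -> R) : Prop :=
  forall x y, X x -> X y -> 1 <= alpha x y -> 1 <= alpha (T x) (T y).

Definition Mxy (R : realType) (U : Type) (d : U -> U -> R) (T : U -> U) (x y : U) : R :=
  Num.max (Num.max (d x y) (d x (T x)))
          (Num.max (d y (T y)) ((d x (T y) + d y (T x)) / 2)).

(* Main.v *)
Require Import Defs.
From HB Require Import structures.
From mathcomp Require Import all_boot all_order all_algebra.
From mathcomp Require Import all_classical all_reals exp.
From mathcomp Require Import finmap zify lra.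
Import Order.TTheory GRing.Theory Num.Theory.
Local Open Scope ring_scope.
Local Open Scope classical_set_scope.
Lemma bigmax_ge_seq (R : realType) (I : eqType) (s : seq I) (F : I -> R) c i :
  i \in s -> F i <= \big[Num.max/c]_(j <- s) F j.
Proof.
elim: s => // a s IH; rewrite in_cons big_cons => /orP [/eqP ->|/IH h].
  by rewrite le_max lexx.
by rewrite le_max h orbT.
Qed.

Lemma powR_ge1 (R : realType) (a r : R) : 1 <= a -> 0 <= r -> 1 <= a `^ r.
Proof. by move=> a1 r0; rewrite -(powRr0 a); apply: ler_powR. Qed.

Lemma lp_discrete (R : realType) n (p : lp_index R) (x y : 'rV[int]_n) :
  valid_lp_index p -> x <> y -> 1 <= lp_dist p x y.
Proof.
move=> vp xy.
have [i hi] : exists i, x ord0 i != y ord0 i.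
  apply: contrapT => hn; apply: xy; apply/matrixP => a b; rewrite (ord1 a).
  by apply/eqP; apply: contrapT => h; apply: hn; exists b; apply/negP.
have h1 : 1 <= `|((x ord0 i - y ord0 i)%:~R : R)|.
  rewrite -intr_norm ler1z; move: hi; lia.
case: p vp => [q|] /= vp.
- have q0 : 0 <= q by apply: (le_trans ler01 vp).
  apply: powR_ge1; last by rewrite invr_ge0.
  rewrite (bigD1 i) //=.
  rewrite -[X in X <= _](addr0 1); apply: lerD; first exact: powR_ge1.
  apply: sumr_ge0 => j _; exact: powR_ge0.
- exact: (le_trans h1 (@bigmax_ge_seq _ _ _ _ 0 i (mem_index_enum i))).
Qed.

Lemma bigmin_le_seq (R : realType) (I : eqType) (s : seq I) (F : I -> R) c i :
  i \in s -> \big[Num.min/c]_(j <- s) F j <= F i.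
Proof.
elim: s => // a s IH; rewrite in_cons big_cons => /orP [/eqP ->|/IH h].
  by rewrite ge_min lexx.
by rewrite ge_min h orbT.
Qed.

Lemma finite_discrete (R : realType) (U : choiceType) (X : set U) (d : U -> U -> R) :
  finite_set X -> (forall x y, X x -> X y -> x <> y -> 0 < d x y) ->
  exists eps, 0 < eps /\ forall x y, X x -> X y -> x <> y -> eps <= d x y.
Proof.
move=> fX dpos.
have memX : forall x, (x \in (fset_set X : seq U)) = (x \in X).
  by move=> x; rewrite -(in_fset_set fX x).
pose s := [seq (x, y) | x <- (fset_set X : seq U), y <- (fset_set X : seq U)].
pose F := fun p : U * U => if p.1 != p.2 then d p.1 p.2 else 1.
exists (\big[Num.min/1]_(p <- s) F p); split.
  rewrite big_seq; apply: (big_ind (fun v => 0 < v)) => //.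
    by move=> a b a0 b0; rewrite lt_min a0 b0.
  case=> x y /allpairsP [[x' y'] /= [hx hy [-> ->]]].
  rewrite /F /=; case: eqP => // hne.
  by apply: dpos => //; [move: hx | move: hy]; rewrite memX in_setE.
move=> x y hx hy hne.
have : (x, y) \in s.
  by apply/allpairsP; exists (x, y) => /=; rewrite !memX !in_setE.
move/(@bigmin_le_seq _ _ _ F 1); rewrite /F /=; case: eqP => // _.
Qed.

Theorem theorem7p8 (R : realType) (n : nat) (X : set 'rV[int]_n)
  (kappa : 'rV[int]_n -> 'rV[int]_n -> bool)
  (d : 'rV[int]_n -> 'rV[int]_n -> R)
  (T : 'rV[int]_n -> 'rV[int]_n) (alpha : 'rV[int]_n -> 'rV[int]_n -> R)
  (psi phi : R -> R) :
  (0 < n)%N ->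
  is_metric_on X d ->
  finite_set X \/ is_lp_metric_on X d ->
  (forall x, X x -> X (T x)) ->
  (forall x y, X x -> X y -> 0 <= alpha x y) ->
  alpha_admissible X T alpha ->
  (exists x0, X x0 /\ 1 <= alpha x0 (T x0)) ->
  PhiClass psi -> PhiClass phi ->
  (forall x y, X x -> X y ->
     alpha x y * psi (d (T x) (T y)) <= psi (Mxy d T x y) - phi (Mxy d T x y)) ->
  (exists x, X x /\ T x = x) /\
  (forall u v, X u -> X v -> T u = u -> T v = v -> 1 <= alpha u v -> u = v).
Proof.
move=> n0 [d0 [d00 [dsym dtri]]] hcase TX a0 adm [x0 [Xx0 ax0]]
  [ps0 [psinc [pseq pslt]]] [ph0 [phinc [pheq phlt]]] hc.
have phpos : forall t, 0 < t -> 0 < phi t.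
  move=> t t0; rewrite lt_neqAle ph0 ?andbT; last exact: ltW.
  apply/eqP => /esym /(pheq t (ltW t0)) h; by rewrite h ltxx in t0.
have ddiag : forall x, X x -> d x x = 0 by move=> x Xx; apply/(d00 x x Xx Xx).
split; last first.
  move=> u v Xu Xv Tu Tv auv.
  have := hc u v Xu Xv; rewrite Tu Tv.
  have eM : Mxy d T u v = d u v.
    rewrite /Mxy Tu Tv ddiag // ddiag // (dsym v u) //.
    have h0 := d0 u v Xu Xv.
    apply/le_anti/andP; split.
      rewrite !ge_max lexx h0 /=. lra.
    by rewrite !le_max lexx.
  rewrite eM => h.
  have hps := ps0 _ (d0 u v Xu Xv).
  have : psi (d u v) <= alpha u v * psi (d u v).
    by rewrite -[X in X <= _]mul1r; apply: ler_wpM2r.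
  move=> h2.
  have hph : phi (d u v) <= 0 by lra.
  have : phi (d u v) = 0 by apply/le_anti; rewrite hph ph0 // d0.
  by move/(pheq _ (d0 u v Xu Xv))/(d00 u v Xu Xv).
have [eps [eps0 epsle]] : exists eps, 0 < eps /\
    forall x y, X x -> X y -> x <> y -> eps <= d x y.
  case: hcase => [fX|[p [vp hp]]].
    apply: finite_discrete => // x y Xx Xy hxy.
    rewrite lt_neqAle d0 // andbT; apply/eqP => /esym /(d00 x y Xx Xy).
    exact: hxy.
  exists 1; split => // x y Xx Xy hxy; rewrite hp //; exact: lp_discrete.
apply: contrapT => nofix.
pose x k := iter k T x0.
have Xx : forall k, X (x k) by elim => [|k IH] //=; apply: TX.
have ax : forall k, 1 <= alpha (x k) (x k.+1).
  by elim => [|k IH]; [exact: ax0 | exact: (adm _ _ (Xx k) (Xx k.+1) IH)].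
pose D k := d (x k) (x k.+1).
have Dge : forall k, eps <= D k.
  move=> k; apply: epsle => // h; apply: nofix; exists (x k); split => //.
have D0 : forall k, 0 <= D k by move=> k; apply: d0.
have phe := phpos _ eps0.
have step : forall k, psi (D k.+1) <= psi (D k) - phi eps.
  move=> k.
  have := hc (x k) (x k.+1) (Xx k) (Xx k.+1).
  have -> : T (x k) = x k.+1 by [].
  have -> : T (x k.+1) = x k.+2 by [].
  set M := Mxy d T (x k) (x k.+1).
  have Mle : forall c, D k <= c -> D k.+1 <= c -> M <= c.
    move=> c h1 h2; rewrite /M /Mxy.
    have -> : T (x k) = x k.+1 by [].
    have -> : T (x k.+1) = x k.+2 by [].
    have -> : d (x k) (x k.+1) = D k by [].
    have -> : d (x k.+1) (x k.+2) = D k.+1 by [].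
    rewrite ddiag // !ge_max h1 h2 /=.
    have := dtri (x k) (x k.+1) (x k.+2) (Xx _) (Xx _) (Xx _).
    rewrite -/(D k) -/(D k.+1) => ht; lra.
  have Mge1 : D k <= M by rewrite /M /Mxy !le_max lexx.
  have Mge2 : D k.+1 <= M.
    rewrite /M /Mxy.
    have -> : T (x k.+1) = x k.+2 by [].
    have -> : d (x k.+1) (x k.+2) = D k.+1 by [].
    by rewrite !le_max lexx !orbT.
  have hps := ps0 _ (D0 k.+1).
  have : psi (D k.+1) <= alpha (x k) (x k.+1) * psi (D k.+1).
    by rewrite -[X in X <= _]mul1r; apply: ler_wpM2r.
  move=> h2 h.
  case: (ltP (D k) (D k.+1)) => hab.
    have eM : M = D k.+1 by apply/le_anti; rewrite Mle ?lexx ?Mge2 // ltW.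
    rewrite eM in h.
    have := phpos _ (lt_le_trans eps0 (Dge k.+1)); lra.
  have eM : M = D k by apply/le_anti; rewrite Mle ?lexx ?Mge1.
  rewrite eM in h.
  have : phi eps <= phi (D k).
    case: (ltP eps (D k)) => he; first exact/ltW/phinc/he/ltW.
    by have -> : eps = D k by apply/le_anti; rewrite he Dge.
  lra.
have bound : forall k, psi (D k) <= psi (D 0%N) - k%:R * phi eps.
  elim => [|k IH]; first by rewrite mul0r subr0.
  have := step k; rewrite mulrSr mulrDl mul1r; lra.
pose c := psi (D 0%N) / phi eps.
have c0 : 0 <= c by rewrite divr_ge0 // ?ps0 // ltW.
have hk := archi_boundP c0.
set k := Num.Def.archi_bound c in hk.
have : psi (D 0%N) < k%:R * phi eps by rewrite -ltr_pdivrMr.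
have := bound k; have := ps0 _ (D0 k); lra.
Qed.
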